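(* Let $S$ be a finite state space, let $P\in\mathbb{R}^{|S|\times|S|}$ be a row-stochastic matrix, let $\gamma\in[0,1)$, $\beta\in(0,1)$, and let $R\in\mathbb{R}^{|S|}$. Let $d_\mu\in\mathbb{R}^{|S|}$ be a probability vector, and define $f$ by $f^\top = d_\mu^\top (I-\beta P)^{-1}$; assume $f(s)>0$ for all $s\in S$. Let $\kappa = \min_{s\in S} \frac{d_\mu(s)}{f(s)}$. Let $T:\mathbb{R}^{|S|}\to\mathbb{R}^{|S|}$ be $T(V)=R+\gamma P V$, and let $\Pi_f$ be the orthogonal projection, with respect to the $f$-weighted Euclidean norm $\|v\|_f=\sqrt{\sum_s f(s)v(s)^2}$, onto a fixed linear subspace of $\mathbb{R}^{|S|}$ (the span of the feature vectors). If $\beta>\gamma^2(1-\kappa)$, then for all $v_1,v_2\in\mathbb{R}^{|S|}$, $$\|\Pi_f T v_1-\Pi_f T v_2\|_f\le \sqrt{\tfrac{\gamma^2}{\beta}(1-\kappa)}\,\|v_1-v_2\|_f,$$ i.e. $\Pi_f T$ is a $\sqrt{\frac{\gamma^2}{\beta}(1-\kappa)}$-contraction in the $f$-weighted norm.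
   Context: Setting: a finite Markov decision process with target policy $\pi$ and behavior policy $\mu$; $P$ and $R$ are the transition matrix and reward vector induced by the target policy $\pi$, and $d_\mu$ is the stationary distribution over states induced by the behavior policy $\mu$. The vector $f$ is called the emphatic weight vector and $\kappa$ measures the discrepancy between target and behavior policies. The subspace onto which $\Pi_f$ projects is the span of the columns of $\Phi^\top$, where $\Phi$ is the matrix whose columns are the feature vectors $\phi(s)\in\mathbb{R}^n$. *)

(* Defs.v *)
From mathcomp Require Import all_boot all_order all_algebra.
Set Implicit Arguments. Unset Strict Implicit. Unset Printing Implicit Defensive.
Import Order.TTheory GRing.Theory Num.Theory.
Local Open Scope ring_scope.

Definition row_stochastic (R : numDomainType) (n : nat) (P : 'M[R]_n) : Prop :=
  (forall i j, 0 <= P i j) /\ (forall i, \sum_j P i j = 1).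

Definition prob_vector (R : numDomainType) (n : nat) (d : 'cV[R]_n) : Prop :=
  (forall i, 0 <= d i 0) /\ \sum_i d i 0 = 1.

Definition emphatic_weight (R : fieldType) (n : nat) (beta : R)
  (P : 'M[R]_n) (d : 'cV[R]_n) : 'cV[R]_n :=
  (d^T *m invmx (1%:M - beta *: P))^T.

(* kappa = min_s d(s) / f(s)   (n > 0 so the min is over a nonempty set) *)
Definition kappa (R : realFieldType) (n : nat) (d f : 'cV[R]_n.+1) : R :=
  \big[Num.min/ d ord0 0 / f ord0 0]_(s < n.+1) (d s 0 / f s 0).

Definition fdot (R : numDomainType) (n : nat) (f u v : 'cV[R]_n) : R :=
  \sum_s f s 0 * u s 0 * v s 0.
Definition fnorm (R : rcfType) (n : nat) (f v : 'cV[R]_n) : R :=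
  Num.sqrt (\sum_s f s 0 * (v s 0) ^+ 2).

Definition bellman (R : ringType) (n : nat) (Rw : 'cV[R]_n) (gamma : R)
  (P : 'M[R]_n) (V : 'cV[R]_n) : 'cV[R]_n := Rw + gamma *: (P *m V).

Definition in_span (R : ringType) (n k : nat) (Phi : 'M[R]_(n, k)) (y : 'cV[R]_n) : Prop :=
  exists c : 'cV[R]_k, y = Phi *m c.

Definition is_f_orth_proj (R : numDomainType) (n k : nat) (f : 'cV[R]_n)
  (Phi : 'M[R]_(n, k)) (Pi : 'cV[R]_n -> 'cV[R]_n) : Prop :=
  forall v, in_span Phi (Pi v) /\
            (forall w, in_span Phi w -> fdot f (v - Pi v) w = 0).

(* Main.v *)
Require Import Defs.
From mathcomp Require Import all_boot all_order all_algebra.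
From mathcomp Require Import ring lra.
Import Order.TTheory GRing.Theory Num.Theory.
Local Open Scope ring_scope.

Lemma unit_IbP (R : rcfType) (n : nat) (P : 'M[R]_n.+1) (beta : R) :
  row_stochastic P -> 0 <= beta -> beta < 1 ->
  (1%:M - beta *: P) \in unitmx.
Proof.
move=> [P0 P1] b0 b1.
rewrite -row_free_unit -kermx_eq0; apply/rowV0P => v /sub_kermxP H.
have Hv : forall j, v 0 j = beta * \sum_i v 0 i * P i j.
  move=> j; have := congr1 (fun M : 'rV_n.+1 => M 0 j) H.
  rewrite mulmxBr mulmx1 -scalemxAr !mxE => /eqP; rewrite subr_eq0 => /eqP ->.
  by [].

have Hs : \sum_j `|v 0 j| <= beta * \sum_j `|v 0 j|.
  apply: (@le_trans _ _ (\sum_j beta * \sum_i `|v 0 i| * P i j)).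
    apply: ler_sum => j _; rewrite Hv normrM ger0_norm //.
    apply: ler_wpM2l => //; apply: (le_trans (ler_norm_sum _ _ _)).
    by apply: ler_sum => i _; rewrite normrM (ger0_norm (P0 i j)).
  rewrite -mulr_sumr; apply: ler_wpM2l => //.
  rewrite exchange_big /=; apply: ler_sum => i _.
  by rewrite -mulr_sumr P1 mulr1.
have S0 : 0 <= \sum_j `|v 0 j| by apply: sumr_ge0 => j _.
have Seq : \sum_j `|v 0 j| = 0 by nra.
apply/matrixP => i j; rewrite mxE ord1.
by apply/eqP; rewrite -normr_eq0; apply/eqP; apply: (psumr_eq0P _ Seq).
Qed.

Lemma emph_eq (R : rcfType) (n : nat) (P : 'M[R]_n.+1) (beta : R) d :
  row_stochastic P -> 0 <= beta -> beta < 1 ->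
  forall j, emphatic_weight beta P d j 0 =
    d j 0 + beta * \sum_i emphatic_weight beta P d i 0 * P i j.
Proof.
move=> HP b0 b1 j; set f := emphatic_weight beta P d.
have U := @unit_IbP R n P beta HP b0 b1.
have H : f^T *m (1%:M - beta *: P) = d^T.
  by rewrite /f /emphatic_weight trmxK -mulmxA mulVmx // mulmx1.
clearbody f.
have := congr1 (fun M : 'rV_n.+1 => M 0 j) H.
rewrite mulmxBr mulmx1 -scalemxAr !mxE => <-.
under eq_bigr do rewrite mxE.
by rewrite subrK.
Qed.

Lemma fdotB (R : rcfType) n (f x y z : 'cV[R]_n) :
  fdot f (x - y) z = fdot f x z - fdot f y z.
Proof. rewrite /fdot -sumrB; apply: eq_bigr => i _; rewrite !mxE.
move: (f i 0) (x i 0) (y i 0) (z i 0) => a b c e; ring. Qed.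

Lemma alg1 (R : rcfType) (p q r : R) :
  p * q ^+ 2 = p * (q - r) ^+ 2 + 2 * (p * (q - r) * r) + p * r ^+ 2.
Proof. ring. Qed.

Lemma sq_split (R : rcfType) n (f a w : 'cV[R]_n) :
  (forall s, 0 < f s 0) -> fdot f (a - w) w = 0 ->
  \sum_s f s 0 * (w s 0) ^+ 2 <= \sum_s f s 0 * (a s 0) ^+ 2.
Proof.
move=> fp H.
have E : \sum_s f s 0 * (a s 0) ^+ 2 =
  \sum_s f s 0 * ((a - w) s 0) ^+ 2 + 2 * fdot f (a - w) w + \sum_s f s 0 * (w s 0) ^+ 2.
  rewrite /fdot mulr_sumr -!big_split /=; apply: eq_bigr => i _; rewrite !mxE.
  exact: alg1.
rewrite E H mulr0 addr0 lerDr; apply: sumr_ge0 => i _.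
by apply: mulr_ge0; [apply: ltW | apply: sqr_ge0].
Qed.

Lemma alg2 (R : rcfType) (p u m : R) :
  p * (u - m) ^+ 2 = p * u ^+ 2 - 2 * m * (p * u) + m ^+ 2 * p.
Proof. ring. Qed.

Lemma jensen (R : rcfType) n (p u : 'I_n -> R) :
  (forall j, 0 <= p j) -> \sum_j p j = 1 ->
  (\sum_j p j * u j) ^+ 2 <= \sum_j p j * (u j) ^+ 2.
Proof.
move=> p0 p1; set m := \sum_j p j * u j.
have H : 0 <= \sum_j p j * (u j - m) ^+ 2.
  by apply: sumr_ge0 => j _; apply: mulr_ge0 => //; apply: sqr_ge0.
have E : \sum_j p j * (u j - m) ^+ 2 =
   \sum_j p j * (u j) ^+ 2 - \sum_j 2 * m * (p j * u j) + \sum_j m ^+ 2 * p j.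
  rewrite -sumrB -big_split /=; apply: eq_bigr => j _; exact: alg2.
have E1 : \sum_j 2 * m * (p j * u j) = 2 * m * m by rewrite -mulr_sumr.
have E2 : \sum_j m ^+ 2 * p j = m ^+ 2 by rewrite -mulr_sumr p1 mulr1.
move: H; rewrite E E1 E2; lra.
Qed.

Lemma fdot4 (R : rcfType) n (f a b x y z : 'cV[R]_n) :
  fdot f (a - b - (x - y)) z = fdot f (a - x) z - fdot f (b - y) z.
Proof. rewrite /fdot -sumrB; apply: eq_bigr => i _; rewrite !mxE.
move: (f i 0) (a i 0) (b i 0) (x i 0) (y i 0) (z i 0) => p q r s t e; ring. Qed.

Lemma alg3 (R : rcfType) (r g x y : R) : r + g * x - (r + g * y) = g * (x - y).
Proof. ring. Qed.

Lemma alg4 (R : rcfType) (b x y z : R) : b * (x * (y * z)) = b * (z * (x * y)).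
Proof. ring. Qed.

Lemma alg5 (R : rcfType) (g b k q : R) : g / b * k * q = g * (k * q / b).
Proof. ring. Qed.

Theorem theorem1 (R : rcfType) (n k : nat) (P : 'M[R]_n.+1) (gamma beta : R)
  (Rw : 'cV[R]_n.+1) (d : 'cV[R]_n.+1) (Phi : 'M[R]_(n.+1, k))
  (Pi : 'cV[R]_n.+1 -> 'cV[R]_n.+1) :
  row_stochastic P ->
  0 <= gamma -> gamma < 1 ->
  0 < beta -> beta < 1 ->
  prob_vector d ->
  (forall s, 0 < emphatic_weight beta P d s 0) ->
  is_f_orth_proj (emphatic_weight beta P d) Phi Pi ->
  beta > gamma ^+ 2 * (1 - kappa d (emphatic_weight beta P d)) ->
  forall v1 v2 : 'cV[R]_n.+1,
    fnorm (emphatic_weight beta P d)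
      (Pi (bellman Rw gamma P v1) - Pi (bellman Rw gamma P v2))
    <= Num.sqrt (gamma ^+ 2 / beta * (1 - kappa d (emphatic_weight beta P d)))
       * fnorm (emphatic_weight beta P d) (v1 - v2).
Proof.
move=> HP g0 g1 b0 b1 [d0 d1] fpos Hproj _ v1 v2.
have hf := @emph_eq R n P beta d HP (ltW b0) b1.
set f := emphatic_weight beta P d in fpos Hproj hf *.
set K := kappa d f.
have hK : forall j, K * f j 0 <= d j 0.
  move=> j; rewrite -ler_pdivlMr //; exact: bigmin_le.
have fd : forall j, d j 0 <= f j 0.
  move=> j; rewrite hf lerDl; apply: mulr_ge0; first exact: ltW.
  apply: sumr_ge0 => i _; apply: mulr_ge0; [exact: ltW (fpos i) | exact: HP.1].
have K1 : K <= 1.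
  have := hK ord0; have := fd ord0; have := fpos ord0.
  move: (K) (d ord0 0) (f ord0 0) => x y z; nra.
clearbody f K.
set a := bellman Rw gamma P v1; set b := bellman Rw gamma P v2.
set w := Pi a - Pi b; set u := v1 - v2.
have Hw : fdot f (a - b - w) w = 0.
  have [[ca Ha] Oa] := Hproj a; have [[cb Hb] Ob] := Hproj b.
  have Sw : in_span Phi w by exists (ca - cb); rewrite /w Ha Hb mulmxBr.
  by rewrite /w fdot4 (Oa _ Sw) (Ob _ Sw) subrr.
have S1 := @sq_split R n.+1 f (a - b) w fpos Hw.
pose M s := \sum_j P s j * u j 0.
have Eab : forall s, (a - b) s 0 = gamma * M s.
  move=> s; rewrite /a /b /bellman !mxE.
  have -> : M s = \sum_j P s j * v1 j 0 - \sum_j P s j * v2 j 0.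
    rewrite -sumrB; apply: eq_bigr => j _; rewrite /u !mxE mulrBr //.
  exact: alg3.
set Y := \sum_s f s 0 * \sum_j P s j * (u j 0) ^+ 2.
have S2 : \sum_s f s 0 * ((a - b) s 0) ^+ 2 <= gamma ^+ 2 * Y.
  rewrite /Y mulr_sumr; apply: ler_sum => s _; rewrite Eab exprMn.
  rewrite mulrCA; apply: ler_wpM2l; first exact: sqr_ge0.
  apply: ler_wpM2l; first exact: ltW.
  by apply: jensen; [exact: HP.1 | exact: HP.2].
set Q := \sum_s f s 0 * (u s 0) ^+ 2.
have Q0 : 0 <= Q by apply: sumr_ge0 => s _; apply: mulr_ge0; [exact: ltW | exact: sqr_ge0].
have S3 : beta * Y <= (1 - K) * Q.
  have -> : beta * Y = \sum_j (u j 0) ^+ 2 * (f j 0 - d j 0).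
    rewrite /Y mulr_sumr.
    under eq_bigr do rewrite !mulr_sumr.
    rewrite exchange_big /=.
    apply: eq_bigr => j _.
    rewrite hf addrC addKr mulrCA !mulr_sumr; apply: eq_bigr => i _.
    exact: alg4.
  rewrite /Q mulr_sumr; apply: ler_sum => j _.
  have := hK j; have := fpos j; have := sqr_ge0 (u j 0).
  move: (K) (u j 0 ^+ 2) (f j 0) (d j 0) => x y z t; nra.
have Y0 : 0 <= Y.
  apply: sumr_ge0 => s _; apply: mulr_ge0; first exact: ltW.
  apply: sumr_ge0 => j _; apply: mulr_ge0; [exact: HP.1 | exact: sqr_ge0].
have Fin : \sum_s f s 0 * (w s 0) ^+ 2 <= gamma ^+ 2 / beta * (1 - K) * Q.
  apply: (le_trans S1); apply: (le_trans S2).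
  have Yb : Y <= (1 - K) * Q / beta by rewrite ler_pdivlMr // mulrC.
  rewrite alg5; apply: ler_wpM2l => //; exact: sqr_ge0.
rewrite /fnorm -/Q -sqrtrM; last first.
  apply: mulr_ge0; last by rewrite subr_ge0.
  by apply: divr_ge0; [exact: sqr_ge0 | exact: ltW].
exact: ler_wsqrtr.
Qed.
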